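(* Let $n\geq 4$ and $m=\lfloor (n-2)/2\rfloor$. Let $G_m$ be the group generated by the maps in $\mathcal C_n$, acting on the set of all permutations of length $n$. Then every orbit of this action has size $2^m$, and for any orbit $A$, \[\sum_{p\in A} z^{\mathrm{run}(p)} = z^a(1+z)^m\] for some nonnegative integer $a$.
   Context: For a permutation $p=p_1p_2\cdots p_n$ and an index $i\in[2,n-1]$, $p$ changes direction at $i$ if $p_{i-1}<p_i>p_{i+1}$ or $p_{i-1}>p_i<p_{i+1}$; $\mathrm{run}(p)=k$ means $p$ changes direction exactly $k-1$ times (the number of alternating runs). For a string $s$ of distinct integers with underlying set $S$, its complement relative to $S$ is obtained by replacing, for each $j$, the $j$th smallest element of $S$ by the $j$th largest element of $S$. For $1\leq i\leq n$, $c_i$ is the map on permutations of length $n$ that leaves $p_1\cdots p_{i-1}$ unchanged and replaces $p_ip_{i+1}\cdots p_n$ by its complement relative to $\{p_i,\dots,p_n\}$. If $n$ is even, $\mathcal C_n=\{c_3,c_5,c_7,\dots,c_{n-1}\}$; if $n$ is odd, $\mathcal C_n=\{c_3,c_5,c_7,\dots,c_{n-2}\}$. In both cases $\mathcal C_n$ has $m=\lfloor (n-2)/2\rfloor$ elements, each an involution, pairwise commuting, so they generate a group $G_m\cong(\mathbb Z_2)^m$ acting on permutations of length $n$. *)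

(* Defs.v *)
From mathcomp Require Import all_boot all_order all_algebra all_fingroup.
Set Implicit Arguments. Unset Strict Implicit. Unset Printing Implicit Defensive.

(* A permutation p = p_1 ... p_n of length n is modelled as p : 'S_n, with
   p_i := val (p (i-1)) (0-based values; only relative order matters). *)

Definition pseq n (p : {ffun 'I_n -> 'I_n}) : seq nat := [seq val (p k) | k <- ord_enum n].

(* p_i for 1-based position i *)
Definition pat n (p : 'S_n) (i : nat) : nat := nth 0 (pseq (pval p)) i.-1.

Definition dirchange n (p : 'S_n) (i : nat) : bool :=
  ((pat p i.-1 < pat p i) && (pat p i > pat p i.+1)) ||
  ((pat p i.-1 > pat p i) && (pat p i < pat p i.+1)).

Definition run n (p : 'S_n) : nat := (count (dirchange p) (iota 2 (n - 2))).+1.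

Definition tailvals n (f : {ffun 'I_n -> 'I_n}) (i : nat) : seq nat :=
  sort leq (map (fun k : 'I_n => val (f k)) (filter (fun k : 'I_n => i <= k.+1) (ord_enum n))).

(* complement of the suffix p_i ... p_n relative to its underlying set:
   the j-th smallest element (0-based rank r) is replaced by the j-th largest
   (0-based rank size-1-r). *)
Definition compl_suffix n (i : nat) (f : {ffun 'I_n -> 'I_n}) : {ffun 'I_n -> 'I_n} :=
  [ffun j : 'I_n => if i <= j.+1 then
     let s := tailvals f i in
     insubd (f j) (nth 0 s ((size s).-1 - index (val (f j)) s))
   else f j].

(* the map c_i on permutations of length n (the result is always a permutation;
   insubd only provides a default to make the definition total) *)
Definition cmap n (i : nat) (p : 'S_n) : 'S_n := insubd p (compl_suffix i (pval p)).

Definition Cidx (n i : nat) : bool :=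
  [&& odd i, 3 <= i & i <= (if odd n then n - 2 else n - 1)].

Definition gstep n : rel 'S_n :=
  fun p q => [exists i : 'I_n.+1, Cidx n i && (q == cmap i p)].

(* orbit of p under the group generated by C_n (words in the generators) *)
Definition Gorbit n (p : 'S_n) : {set 'S_n} := [set q | connect (@gstep n) p q].

(* Main.v *)
Require Import Defs.
From mathcomp Require Import all_boot all_order all_algebra all_fingroup.
From mathcomp Require Import zify ring.
Set Implicit Arguments. Unset Strict Implicit. Unset Printing Implicit Defensive.

Section Core.
Variable n : nat.
Implicit Types (p q : 'S_n) (t : nat).

Lemma pv p (k : 'I_n) : pval p k = p k.
Proof. by rewrite pvalE. Qed.

Definition sv (f : {ffun 'I_n -> 'I_n}) t :=
  map (fun k : 'I_n => val (f k)) (filter (fun k : 'I_n => t <= k.+1) (ord_enum n)).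

Lemma sv_uniq p t : uniq (sv (pval p) t).
Proof.
rewrite /sv map_inj_uniq ?filter_uniq ?ord_enum_uniq // => a b /val_inj.
by rewrite !pv => /perm_inj.
Qed.

Lemma mem_sv p t (v : 'I_n) : (val v \in sv (pval p) t) = (t <= ((p^-1)%g v).+1).
Proof.
apply/mapP/idP => [[k]|h].
  rewrite mem_filter mem_ord_enum andbT => hk /val_inj ->.
  by rewrite pv permK.
exists ((p^-1)%g v); first by rewrite mem_filter mem_ord_enum andbT.
by rewrite pv permKV.
Qed.

Lemma sv_lt p t x : x \in sv (pval p) t -> x < n.
Proof. by case/mapP => k _ ->; exact: ltn_ord. Qed.

Lemma ts_sorted p t : sorted ltn (tailvals (pval p) t).
Proof.
rewrite ltn_sorted_uniq_leq sort_uniq sv_uniq sort_sorted //; exact: leq_total.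
Qed.

Lemma mem_ts p t x : (x \in tailvals (pval p) t) = (x \in sv (pval p) t).
Proof. by rewrite /tailvals mem_sort. Qed.

Lemma nth_ltn (s : seq nat) a b : sorted ltn s -> a < size s -> b < size s ->
  (nth 0 s a < nth 0 s b) = (a < b).
Proof.
move=> ss ha hb.
have H := sorted_ltn_nth ltn_trans 0 ss.
case: (ltngtP a b) => h.
- exact: H.
- by apply/negbTE; rewrite -leqNgt ltnW //; apply: H.
- by rewrite h ltnn.
Qed.

Definition phi p t x :=
  let s := tailvals (pval p) t in nth 0 s ((size s).-1 - index x s).

Lemma phi_mem p t x : x \in tailvals (pval p) t -> phi p t x \in tailvals (pval p) t.
Proof.
move=> hx; rewrite /phi; apply: mem_nth.
have : 0 < size (tailvals (pval p) t) by case: (tailvals _ _) hx.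
by case: (size _) => // m _; rewrite /= ltnS leq_subr.
Qed.

Lemma phi_rev p t x y : x \in tailvals (pval p) t -> y \in tailvals (pval p) t ->
  (phi p t x < phi p t y) = (y < x).
Proof.
move=> hx hy; rewrite /phi.
set s := tailvals (pval p) t.
have ss : sorted ltn s by exact: ts_sorted.
have ix := hx; have iy := hy.
rewrite -index_mem in ix; rewrite -index_mem in iy.
have -> : (y < x) = (index y s < index x s) by rewrite -(nth_ltn ss iy ix) !nth_index.
move: ix iy; rewrite -/s.
case E: (size s) => [//|m] /= ix iy.
rewrite nth_ltn ?E //; lia.
Qed.

Lemma phi_lt p t x : x \in tailvals (pval p) t -> phi p t x < n.
Proof. by move=> hx; apply: (@sv_lt p t); rewrite -mem_ts phi_mem. Qed.

Lemma compl_val p t (j : 'I_n) :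
  val (compl_suffix t (pval p) j) = if t <= j.+1 then phi p t (p j) else p j.
Proof.
rewrite /compl_suffix ffunE; case: ifP => hj /=; rewrite pv //.
rewrite val_insubd.
have hm : val (p j) \in tailvals (pval p) t.
  by rewrite mem_ts mem_sv permK.
have := phi_lt hm; rewrite /phi /= => ->; done.
Qed.

Lemma compl_inj p t : injective (compl_suffix t (pval p)).
Proof.
move=> a b /(congr1 val); rewrite !compl_val.
have ma : t <= a.+1 -> val (p a) \in tailvals (pval p) t.
  by move=> h; rewrite mem_ts mem_sv permK.
have mb : t <= b.+1 -> val (p b) \in tailvals (pval p) t.
  by move=> h; rewrite mem_ts mem_sv permK.
case: ifP => ha; case: ifP => hb.
- move=> e; apply: (@perm_inj _ p); apply: val_inj; move: e.
  case: (ltngtP (p a) (p b)) => // h e.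
    by move: (phi_rev (mb hb) (ma ha)); rewrite e ltnn h.
  by move: (phi_rev (ma ha) (mb hb)); rewrite e ltnn h.
- move=> e; have := phi_mem (ma ha); rewrite e mem_ts mem_sv permK hb //.
- move=> e; have := phi_mem (mb hb); rewrite -e mem_ts mem_sv permK ha //.
- by move/val_inj/perm_inj.
Qed.

Lemma cmapE p t (j : 'I_n) :
  val (cmap t p j) = if t <= j.+1 then phi p t (p j) else p j.
Proof.
rewrite -compl_val /cmap -pv.
have -> : pval (insubd p (compl_suffix t (pval p))) = compl_suffix t (pval p).
  by rewrite val_insubd; case: ifP => //; move/negbT/injectiveP; case; apply: compl_inj.
by [].
Qed.


Lemma cmap_pre p t (k : 'I_n) : ~~ (t <= k.+1) -> cmap t p k = p k.
Proof. by move=> h; apply: val_inj; rewrite cmapE (negbTE h). Qed.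

Lemma cmap_rev p t (k l : 'I_n) : t <= k.+1 -> t <= l.+1 ->
  (cmap t p k < cmap t p l) = (p l < p k).
Proof. by move=> hk hl; rewrite !cmapE hk hl phi_rev // mem_ts mem_sv permK. Qed.

Definition agree t p q := forall k : 'I_n, ~~ (t <= k.+1) -> p k = q k.

Lemma agree_inv t p q v : agree t p q ->
  (t <= ((p^-1)%g v).+1) = (t <= ((q^-1)%g v).+1).
Proof.
move=> A.
have key : forall p' q', agree t p' q' -> ~~ (t <= ((p'^-1)%g v).+1) ->
    (q'^-1)%g v = (p'^-1)%g v.
  by move=> p' q' A' h; apply: (@perm_inj _ q'); rewrite permKV -A' // permKV.
case h: (t <= ((p^-1)%g v).+1).
  case h': (t <= ((q^-1)%g v).+1) => //.
  have e := key q p (fun k hk => esym (A k hk)) (negbT h').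
  by rewrite e h' in h.
by rewrite (key p q A (negbT h)) h.
Qed.

Lemma ts_agree t p q : agree t p q -> tailvals (pval p) t = tailvals (pval q) t.
Proof.
move=> A; apply/perm_sortP; [exact: leq_total| exact: leq_trans| exact: anti_leq|].
apply: uniq_perm; rewrite ?sv_uniq // => x.
case: (ltnP x n) => hx.
  by rewrite -[x]/(val (Ordinal hx)) !mem_sv (agree_inv _ A).
by apply/idP/idP => /sv_lt; rewrite ltnNge hx.
Qed.

Lemma cmap_agree t p q (k : 'I_n) : agree t p q -> t <= k.+1 -> p k = q k ->
  cmap t p k = cmap t q k.
Proof. by move=> A hk e; apply: val_inj; rewrite !cmapE hk /phi (ts_agree A) e. Qed.

Definition srel t p q := forall k l : 'I_n, t <= k.+1 -> t <= l.+1 ->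
  (p k < p l) = (q k < q l).

Lemma U_lt t p q (k : 'I_n) : agree t p q -> srel t p q -> t <= k.+1 ->
  p k < q k -> False.
Proof.
move=> A R hk lt.
pose C (r : 'S_n) (x : 'I_n) := #|[set v : 'I_n | (v < x) && (t <= ((r^-1)%g v).+1)]|.
have Cpq : forall x, C p x = C q x.
  by move=> x; apply: eq_card => v; rewrite !inE (agree_inv v A).
have Ck : forall r : 'S_n, C r (r k) = #|[set l : 'I_n | (r l < r k) && (t <= l.+1)]|.
  move=> r; rewrite -(card_imset _ (@perm_inj _ r)); apply: eq_card => v.
  rewrite inE; apply/idP/imsetP.
  - case/andP => h1 h2; exists ((r^-1)%g v); rewrite ?inE ?permKV ?h1 ?h2 //.
  - by case=> l; rewrite inE => /andP[h1 h2] ->; rewrite permK h1 h2.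
have E : C p (p k) = C q (q k).
  rewrite !Ck; apply: eq_card => l; rewrite !inE.
  by case hl: (t <= l.+1); rewrite ?andbF ?andbT // R.
have : C q (p k) < C q (q k).
  apply: proper_card; rewrite properE; apply/andP; split.
  - apply/subsetP => v; rewrite !inE => /andP[h1 h2]; rewrite (ltn_trans h1 lt) h2.
    by [].
  - apply/subsetPn; exists (p k); rewrite !inE ?ltnn // lt /=.
    by rewrite -(agree_inv _ A) permK.
by rewrite -Cpq E ltnn.
Qed.

Lemma U t p q : agree t p q -> srel t p q -> p = q.
Proof.
move=> A R; apply/permP => k.
case hk: (t <= k.+1); last by apply: A; rewrite hk.
case: (ltngtP (p k) (q k)) => h.
- by case: (U_lt A R hk h).
- have A' : agree t q p by move=> k' hk'; rewrite A.
  have R' : srel t q p by move=> a b ha hb; rewrite R.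
  by case: (U_lt A' R' hk h).
- exact: val_inj.
Qed.

Lemma cmapK t p : cmap t (cmap t p) = p.
Proof.
apply: (U (t := t)) => [k hk|k l hk hl]; first by rewrite !cmap_pre.
by rewrite !cmap_rev.
Qed.

Lemma cmapC i j p : i < j -> cmap i (cmap j p) = cmap j (cmap i p).
Proof.
move=> ij; apply: (U (t := j)) => [k hk|k l hk hl].
  rewrite [in RHS]cmap_pre //.
  case hi: (i <= k.+1); last by rewrite !cmap_pre ?hi.
  apply: cmap_agree => //; last by rewrite cmap_pre.
  move=> k' hk'; rewrite cmap_pre //; apply: contra hk' => h; exact: leq_trans (ltnW ij) h.
have hk' : i <= k.+1 by exact: leq_trans (ltnW ij) hk.
have hl' : i <= l.+1 by exact: leq_trans (ltnW ij) hl.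
by rewrite !cmap_rev.
Qed.

End Core.

Section Pat.
Variable n : nat.
Implicit Types (p q : 'S_n).

Lemma size_ord_enum : size (ord_enum n) = n.
Proof. by rewrite -(size_map val) val_ord_enum size_iota. Qed.

Lemma pat_ord p (k : 'I_n) : pat p k.+1 = val (p k).
Proof.
have e : nth k (ord_enum n) k = k.
  apply: val_inj; rewrite /= -(nth_map k (val k)) ?size_ord_enum //.
  by rewrite val_ord_enum nth_iota.
by rewrite /pat /pseq /= (nth_map k) ?size_ord_enum // e pv.
Qed.

Lemma pat_big p x : n < x -> pat p x = 0.
Proof. by move=> h; rewrite /pat nth_default // size_map size_ord_enum; lia. Qed.

Lemma posP x : 0 < x -> x <= n -> exists k : 'I_n, x = k.+1.
Proof. by case: x => // x _ h; exists (Ordinal h). Qed.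

Lemma pat_agree t p q x : agree t p q -> 0 < x -> x < t -> pat p x = pat q x.
Proof.
move=> A h0 ht; case: (leqP x n) => hn; last by rewrite !pat_big.
have [k ek] := posP h0 hn; subst x.
by rewrite !pat_ord A // -ltnNge.
Qed.

Lemma pat_rev t p x y : 0 < x -> 0 < y -> t <= x -> x <= n -> t <= y -> y <= n ->
  (pat (cmap t p) x < pat (cmap t p) y) = (pat p y < pat p x).
Proof.
move=> hx hy tx xn ty yn.
have [k ek] := posP hx xn; have [l el] := posP hy yn; subst x y.
by rewrite !pat_ord cmap_rev.
Qed.

Lemma pat_neq p x y : 0 < x -> x <= n -> 0 < y -> y <= n -> x != y ->
  pat p x != pat p y.
Proof.
move=> hx xn hy yn.
have [k ek] := posP hx xn; have [l el] := posP hy yn; subst x y.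
rewrite !pat_ord; apply: contra => /eqP /val_inj /perm_inj ->; done.
Qed.

Lemma pat_cagree t p q x : agree t p q -> 0 < x -> x <= n -> t <= x ->
  pat p x = pat q x -> pat (cmap t p) x = pat (cmap t q) x.
Proof.
move=> A hx xn tx.
have [k ek] := posP hx xn; subst x.
by rewrite !pat_ord => /val_inj e; rewrite (cmap_agree A).
Qed.

Definition D p a b := count (dirchange p) (iota a b).

Lemma D_agree p q a b : 0 < a ->
  (forall x, a.-1 <= x -> x <= a + b -> pat p x = pat q x) -> D p a b = D q a b.
Proof.
move=> a0 H; apply: eq_in_count => x; rewrite mem_iota => /andP[h1 h2].
by rewrite /dirchange !H //; lia.
Qed.

Lemma D_rev p q a b : 0 < a ->
  (forall x y, a.-1 <= x -> x <= a + b -> a.-1 <= y -> y <= a + b ->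
     (pat p x < pat p y) = (pat q y < pat q x)) -> D p a b = D q a b.
Proof.
move=> a0 H; apply: eq_in_count => x; rewrite mem_iota => /andP[h1 h2].
have r1 : a.-1 <= x.-1 by lia.
have r1' : x.-1 <= a + b by lia.
have r2 : a.-1 <= x by lia.
have r2' : x <= a + b by lia.
have r3 : a.-1 <= x.+1 by lia.
have r3' : x.+1 <= a + b by lia.
rewrite /dirchange (H _ _ r1 r1' r2 r2') (H _ _ r3 r3' r2 r2') (H _ _ r2 r2' r1 r1').
by rewrite (H _ _ r2 r2' r3 r3') orbC.
Qed.

Lemma run_split p i : 3 <= i -> i < n ->
  run p = (D p 2 (i - 3) + (dirchange p i.-1 + dirchange p i) + D p i.+1 (n - 1 - i)).+1.
Proof.
move=> i3 iN; rewrite /run /D.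
have -> : n - 2 = (i - 3) + (2 + (n - 1 - i)) by lia.
rewrite iotaD iotaD !count_cat.
have -> : 2 + (i - 3) = i.-1 by lia.
have -> : i.-1 + 2 = i.+1 by lia.
rewrite /= -addnA addn0 prednK //; lia.
Qed.

Lemma neqltn (x y : nat) : x != y -> (y < x) = ~~ (x < y).
Proof. by move=> h; rewrite ltnNge leq_eqVlt (negbTE h). Qed.

Lemma delta p i : 3 <= i -> i < n ->
  run (cmap i p) = (run p).+1 \/ run p = (run (cmap i p)).+1.
Proof.
move=> i3 iN; rewrite !(run_split _ i3 iN).
have A : agree i (cmap i p) p by move=> k hk; rewrite cmap_pre.
rewrite (@D_agree (cmap i p) p 2 (i - 3)) //; last first.
  by move=> x h1 h2; apply: (pat_agree A); lia.
rewrite (@D_rev (cmap i p) p i.+1 (n - 1 - i)) //; last first.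
  by move=> x y h1 h2 h3 h4; apply: pat_rev; lia.
case: i i3 iN A => [|[|[|j]]] // _ jn A /=.
move: (D p 2 _) (D p j.+4 _) => K L; rewrite /dirchange /=.
rewrite (pat_agree A (x := j.+1)) // (pat_agree A (x := j.+2)) //.
have r1 := pat_rev p (t := j.+3) (x := j.+3) (y := j.+4).
have r2 := pat_rev p (t := j.+3) (x := j.+4) (y := j.+3).
rewrite r1 ?r2 //; try lia.
have d1 : pat p j.+1 != pat p j.+2 by apply: pat_neq; lia.
have d2 : pat p j.+2 != pat p j.+3 by apply: pat_neq; lia.
have d3 : pat p j.+3 != pat p j.+4 by apply: pat_neq; lia.
have d4 : pat (cmap j.+3 p) j.+2 != pat (cmap j.+3 p) j.+3 by apply: pat_neq; lia.
rewrite (pat_agree A (x := j.+2)) // in d4.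
rewrite (neqltn d1) (neqltn d2) (neqltn d3) (neqltn d4).
move: (pat p j.+1 < pat p j.+2) (pat p j.+2 < pat p j.+3) (pat p j.+3 < pat p j.+4)
  (pat p j.+2 < pat (cmap j.+3 p) j.+3) => a b c b'.
by case: a; case: b; case: c; case: b' => /=; lia.
Qed.

End Pat.
Import GRing.Theory.

Section Orbit.
Variable n : nat.
Implicit Types (p q : 'S_n).

Fixpoint O p (l : seq nat) : {set 'S_n} :=
  if l is i :: l' then O p l' :|: [set cmap i q | q in O p l'] else [set p].

Fixpoint good (l : seq nat) : bool :=
  if l is i :: l' then [&& Cidx n i, all (fun j => i.+2 <= j) l' & good l'] else true.

Lemma Cidx_b i : Cidx n i -> 3 <= i /\ i < n.
Proof. by rewrite /Cidx => /and3P[_ h1 h2]; case: (odd n) h2 => h2; lia. Qed.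

Lemma O_fix l p q : good l -> q \in O p l -> forall k : 'I_n,
  all (fun j => k.+1 < j) l -> q k = p k.
Proof.
elim: l q => [|i l IH] q /=; first by rewrite inE => _ /eqP ->.
case/and3P => Ci al gl; rewrite inE => /orP[hq|/imsetP[q0 hq0 ->]] k /andP[ki ak].
  exact: IH.
by rewrite cmap_pre ?IH // -ltnNge.
Qed.

Lemma O_agree i l p q : good (i :: l) -> q \in O p l -> agree i q p.
Proof.
case/and3P => _ al gl hq k hk; apply: (O_fix gl hq).
apply/allP => j hj; have := allP al j hj; lia.
Qed.

Lemma O_closed l p q j : good l -> q \in O p l -> j \in l -> cmap j q \in O p l.
Proof.
elim: l q => [|i l IH] q //=.
case/and3P => Ci al gl; rewrite !inE => hq /orP[/eqP ->|hj].
  case/orP: hq => [hq|/imsetP[q0 hq0 ->]].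
    by apply/orP; right; apply: imset_f.
  by rewrite cmapK hq0.
case/orP: hq => [hq|/imsetP[q0 hq0 ->]].
  by rewrite IH.
have ij : i < j by have := allP al j hj; lia.
by rewrite -cmapC // imset_f ?orbT // IH.
Qed.

Lemma O_self l p : p \in O p l.
Proof. by elim: l => [|i l IH] /=; rewrite ?inE ?IH. Qed.

Lemma O_conn l p q : good l -> q \in O p l -> connect (@gstep n) p q.
Proof.
elim: l q => [|i l IH] q /=; first by rewrite inE => _ /eqP ->.
case/and3P => Ci al gl; rewrite inE => /orP[hq|/imsetP[q0 hq0 ->]].
  exact: IH.
apply: connect_trans (IH _ gl hq0) (connect1 _).
have [_ iN] := Cidx_b Ci.
have iN1 : i < n.+1 by lia.
by apply/existsP; exists (Ordinal iN1); rewrite /= Ci eqxx.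
Qed.

Lemma O_disj i l p : good (i :: l) -> [disjoint O p l & [set cmap i q | q in O p l]].
Proof.
move=> g; have /and3P[Ci al gl] := g; have [i3 iN] := Cidx_b Ci.
rewrite -setI_eq0; apply/eqP/setP => q; rewrite !inE.
apply/negbTE; apply/negP => /andP[hq /imsetP[q0 hq0 e]].
have k1 : i.-1 < n by lia.
have k2 : i < n by lia.
pose a := Ordinal k1; pose b := Ordinal k2.
have fa : forall r, r \in O p l -> r a = p a.
  move=> r hr; apply: (O_fix gl hr); apply/allP => j hj; have := allP al j hj.
  rewrite /= ; lia.
have fb : forall r, r \in O p l -> r b = p b.
  move=> r hr; apply: (O_fix gl hr); apply/allP => j hj; have := allP al j hj.
  rewrite /= ; lia.
have h := cmap_rev q0 (t := i) (k := a) (l := b).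
rewrite -e fa // fb // fa // fb // in h.
have ne : val (p a) != val (p b).
  by apply/eqP => /val_inj /perm_inj /(congr1 val) /=; lia.
rewrite (@neqltn _ _ ne) in h.
have ha : i <= a.+1 by rewrite /= prednK //; lia.
have hb : i <= b.+1 by rewrite /=.
by move: h; case: (_ < _) => h; move: (h ha hb).
Qed.

Lemma O_card l p : good l -> #|O p l| = 2 ^ size l.
Proof.
elim: l p => [|i l IH] p g /=; first by rewrite cards1.
have /and3P[Ci al gl] := g.
rewrite cardsU (disjoint_setI0 (O_disj p g)) cards0 subn0.
rewrite card_imset; last exact: (can_inj (@cmapK n i)).
by rewrite IH // expnS mul2n addnn.
Qed.

Lemma run_split2 p i : 3 <= i -> i < n ->
  run p = (D p 2 (i - 1) + D p i.+1 (n - 1 - i)).+1.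
Proof.
move=> i3 iN; rewrite /run /D.
have -> : n - 2 = (i - 1) + (n - 1 - i) by lia.
rewrite iotaD count_cat.
by have -> : 2 + (i - 1) = i.+1 by lia.
Qed.

Lemma run_shift i l p q : good (i :: l) -> q \in O p l ->
  (run (cmap i q) + run p = run q + run (cmap i p))%N.
Proof.
move=> g hq; have /and3P[Ci al gl] := g; have [i3 iN] := Cidx_b Ci.
have A := O_agree g hq.
have Aq : forall x, 0 < x -> x <= i.+1 -> pat q x = pat p x.
  move=> x h0 h1; have [k ek] := posP h0 (leq_trans h1 iN); subst x.
  rewrite !pat_ord (O_fix gl hq) //; apply/allP => j hj; have := allP al j hj; lia.
rewrite !(run_split2 _ i3 iN).
have Rv : forall r : 'S_n, D (cmap i r) i.+1 (n - 1 - i) = D r i.+1 (n - 1 - i).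
  by move=> r; apply: D_rev => // x y h1 h2 h3 h4; apply: pat_rev; lia.
rewrite !Rv.
have -> : D q 2 (i - 1) = D p 2 (i - 1).
  by apply: D_agree => // x h1 h2; apply: Aq; lia.
have -> : D (cmap i q) 2 (i - 1) = D (cmap i p) 2 (i - 1).
  apply: D_agree => // x h1 h2.
  case: (ltnP x i) => hx.
    have Ar : forall r : 'S_n, agree i (cmap i r) r by move=> r k hk; rewrite cmap_pre.
    rewrite (pat_agree (Ar q)) ?(pat_agree (Ar p)); try lia; apply: Aq; lia.
  apply: pat_cagree => //; try lia; apply: Aq; lia.
lia.
Qed.

End Orbit.
Import GRing.Theory.

Section Final.
Variable n : nat.
Implicit Types (p q : 'S_n).
Local Open Scope ring_scope.

Lemma O_sum l p : good n l -> exists a : nat,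
  \sum_(q in O p l) 'X^(run q) = 'X^a * (1 + 'X) ^+ size l :> {poly int}.
Proof.
elim: l p => [|i l IH] p g /=.
  by exists (run p); rewrite big_set1 expr0 mulr1.
have /and3P[Ci al gl] := g.
rewrite (eq_bigl [predU O p l & [set cmap i q | q in O p l]]); last first.
  by move=> q; rewrite !inE.
rewrite bigU ?O_disj // big_imset /=; last first.
  by move=> x y _ _; apply: (can_inj (@cmapK n i)).
have [a Ha] := IH p gl.
have RS := fun q (hq : q \in O p l) => run_shift g hq.
have [i3 iN] := Cidx_b Ci.
case: (delta p i3 iN) => hd.
- exists a.
  rewrite [X in _ + X](eq_bigr (fun q => 'X * 'X^(run q))); last first.
    move=> q hq; have := RS q hq; rewrite hd => e; rewrite -exprS; congr ('X^_).
    lia.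
  rewrite -mulr_sumr Ha exprS; ring.
- have E1 : \sum_(q in O p l) 'X^(run q) =
            'X * \sum_(q in O p l) 'X^(run (cmap i q)) :> {poly int}.
    rewrite mulr_sumr; apply: eq_bigr => q hq; rewrite -exprS; congr ('X^_).
    have := RS q hq; rewrite hd; lia.
  rewrite E1 in Ha *.
  case: a Ha => [|a] Ha.
    have := congr1 (fun P : {poly int} => P.[0]) Ha.
    rewrite /= !hornerE expr1n => /eqP; rewrite eq_sym oner_eq0 //.
  rewrite exprS -mulrA in Ha.
  move/(mulfI (negbT (polyX_eq0 _))): Ha => Ha.
  exists a; rewrite Ha exprS; ring.
Qed.

Local Close Scope ring_scope.

Definition Ilist := [seq k.*2.+3 | k <- iota 0 ((n - 2) %/ 2)].

Lemma good_gen m s : s + m <= (n - 2) %/ 2 -> good n [seq k.*2.+3 | k <- iota s m].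
Proof.
elim: m s => [|m IH] s hs //=.
apply/and3P; split.
- rewrite /Cidx /= odd_double /=.
  have hm := modn2 n; case: (odd n) hm => hm /=; rewrite -mul2n; lia.
- rewrite all_map; apply/allP => k; rewrite mem_iota /= => hk.
  rewrite -!mul2n; lia.
- apply: IH; lia.
Qed.

Lemma good_I : good n Ilist.
Proof. by apply: good_gen; rewrite add0n. Qed.

Lemma I_mem i : Cidx n i -> i \in Ilist.
Proof.
rewrite /Cidx => /and3P[oi i3 iN].
have hm := modn2 i; rewrite oi in hm.
have hn := modn2 n.
apply/mapP; exists ((i - 3) %/ 2)%N.
  rewrite mem_iota add0n; case: (odd n) hn iN => hn iN; lia.
rewrite -mul2n; lia.
Qed.

Lemma size_I : size Ilist = ((n - 2) %/ 2)%N.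
Proof. by rewrite size_map size_iota. Qed.

Lemma Gorbit_O p : Gorbit p = O p Ilist.
Proof.
apply/setP => q; rewrite inE; apply/idP/idP; last exact: O_conn good_I.
case/connectP => s ps ->.
have key : forall s x, x \in O p Ilist -> path (@gstep n) x s -> last x s \in O p Ilist.
  elim=> [|y s' IH] x hx //= /andP[e ps']; apply: IH ps'.
  case/existsP: e => j /andP[Cj /eqP ->].
  by apply: O_closed => //; [exact: good_I | exact: I_mem].
exact: key (O_self _ _) ps.
Qed.

End Final.

Local Open Scope ring_scope.

Theorem mainTheorem3 (n : nat) (p : 'S_n) :
  (4 <= n)%N ->
  #|Gorbit p| = (2 ^ ((n - 2) %/ 2))%N /\
  exists a : nat,
    \sum_(q in Gorbit p) 'X^(run q) = 'X^a * (1 + 'X) ^+ ((n - 2) %/ 2) :> {poly int}.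
Proof.
move=> _; rewrite Gorbit_O; split; first by rewrite O_card ?good_I // size_I.
have [a Ha] := O_sum p (good_I n); exists a; by rewrite Ha size_I.
Qed.
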